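(* Let $\mathcal{G}$ be a graph class and let $G$ be a graph with $G\notin\mathcal{G}$. Let $\mathcal{M}$ be a $\mathcal{G}$-modular partition of $G$ and let $\mathcal{M}^*$ be the maximal modular partition of $G$. Then: (i) if $G$ or $\overline{G}$ is disconnected, then for any $M\in\mathcal{M}$ and $M'\in\mathcal{M}^*$, $M\cap M'\in\{M,M',\emptyset\}$; (ii) if $G$ and $\overline{G}$ are both connected, then for every $M\in\mathcal{M}$ there is $M'\in\mathcal{M}^*$ with $M\subseteq M'$.
   Context: A graph class is a (possibly infinite) set of graphs containing at least one non-empty graph. A module of $G=(V,E)$ is a set $M\subseteq V$ such that each $v\in V\setminus M$ is adjacent to all or to none of the vertices of $M$. A module $M$ is strong if for every module $M'$, either $M\subseteq M'$, $M'\subseteq M$ or $M\cap M'=\emptyset$; it is maximal if $M\subsetneq V$ and no module $M'$ satisfies $M\subsetneq M'\subsetneq V$. The maximal modular partition of $G$ is the unique partition of $V$ into maximal strong modules. A module $M$ is a $\mathcal{G}$-module if $G[M]\in\mathcal{G}$; a $\mathcal{G}$-modular partition of $G$ is a partition of $V(G)$ into $\mathcal{G}$-modules. $\overline{G}$ is the complement of $G$. *)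

(* Defs.v *)
From mathcomp Require Import all_boot fingraph.
Set Implicit Arguments. Unset Strict Implicit. Unset Printing Implicit Defensive.

Definition simple_graph (T : finType) (e : rel T) : Prop :=
  symmetric e /\ irreflexive e.

Record graph_class := GraphClass {
  gc_mem : forall T : finType, rel T -> Prop;
  gc_iso : forall (T U : finType) (e : rel T) (f : rel U) (h : T -> U),
      bijective h -> (forall x y, f (h x) (h y) = e x y) ->
      gc_mem e -> gc_mem f;
  gc_nonempty : exists (T : finType) (e : rel T),
      simple_graph e /\ 0 < #|T| /\ gc_mem e
}.
Arguments gc_mem g {T} _.

Definition compl_graph (T : finType) (e : rel T) : rel T :=
  fun x y => (x != y) && ~~ e x y.

Definition connected_graph (T : finType) (e : rel T) : Prop :=
  forall x y : T, connect e x y.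

Definition induced (T : finType) (e : rel T) (M : {set T})
  : rel {x : T | x \in M} := fun x y => e (val x) (val y).

Definition is_module (T : finType) (e : rel T) (M : {set T}) : Prop :=
  forall v, v \notin M -> (forall x, x \in M -> e v x) \/ (forall x, x \in M -> ~~ e v x).

Definition strong_module (T : finType) (e : rel T) (M : {set T}) : Prop :=
  is_module e M /\
  forall M', is_module e M' -> M \subset M' \/ M' \subset M \/ [disjoint M & M'].

Definition maximal_strong_module (T : finType) (e : rel T) (M : {set T}) : Prop :=
  strong_module e M /\ M \proper [set: T] /\
  forall M', strong_module e M' -> M \proper M' -> ~ (M' \proper [set: T]).

Definition maximal_modular_partition (T : finType) (e : rel T)
  (P : {set {set T}}) : Prop :=
  partition P [set: T] /\ forall M, M \in P -> maximal_strong_module e M.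

Definition class_module (C : graph_class) (T : finType) (e : rel T) (M : {set T})
  : Prop := is_module e M /\ gc_mem C (@induced T e M).

Definition class_modular_partition (C : graph_class) (T : finType) (e : rel T)
  (P : {set {set T}}) : Prop :=
  partition P [set: T] /\ forall M, M \in P -> class_module C e M.

(* Main.v *)
Require Import Defs.
From mathcomp Require Import all_boot.
From Stdlib Require Import Classical.
From mathcomp Require Import zify.

Section Aux.
Variable T : finType.

Lemma closed_conn (r : rel T) (S : {set T}) :
  (forall x y, x \in S -> r x y -> y \in S) ->
  forall x y, x \in S -> connect r x y -> y \in S.
Proof.
move=> H x y xS /connectP [p pth ->]; elim: p x xS pth => //= z p IH x xS /andP [rxz pth].
exact: IH z (H _ _ xS rxz) pth.
Qed.

Lemma module_union (e : rel T) (U N : {set T}) :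
  is_module e U -> is_module e N -> (exists b, b \in U :&: N) -> is_module e (U :|: N).
Proof.
move=> HU HN [b]; rewrite inE => /andP [bU bN] v; rewrite inE negb_or => /andP [vU vN].
case: (HU v vU) => H1; case: (HN v vN) => H2.
- by left => x; rewrite inE => /orP [] ?; auto.
- by have := H1 b bU; have := H2 b bN => /negP.
- by have := H1 b bU => /negP; have := H2 b bN.
- by right => x; rewrite inE => /orP [] ?; auto.
Qed.

Lemma overlap_disconn (e : rel T) (U N : {set T}) : symmetric e ->
  is_module e U -> is_module e N -> U :|: N = [set: T] ->
  (exists a, a \in U :\: N) -> (exists c, c \in N :\: U) ->
  ~ connected_graph e \/ ~ connected_graph (compl_graph e).
Proof.
move=> Hs HU HN HUN [a0]; rewrite inE => /andP [a0N a0U] [c0]; rewrite inE => /andP [c0U c0N].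
have inU : forall y, y \notin N :\: U -> y \in U.
  move=> y; rewrite inE negb_and negbK => /orP [] // yN.
  by move: (in_setT y); rewrite -HUN inE (negbTE yN) orbF.
have Hc : forall c, c \in N :\: U -> e c a0 = e a0 c0.
  move=> c; rewrite inE => /andP [cU cN]; rewrite Hs.
  case: (HN a0 a0N) => H; first by rewrite (H c cN) (H c0 c0N).
  by rewrite (negbTE (H c cN)) (negbTE (H c0 c0N)).
case Ht: (e a0 c0).
- right => Hcon.
  suff : a0 \in N :\: U by rewrite inE a0U.
  apply: (@closed_conn (compl_graph e) (N :\: U) _ c0 a0 _ (Hcon c0 a0)); last by rewrite inE c0U c0N.
  move=> x y xS; apply: contraTT => yS; rewrite /compl_graph negb_and negbK.
  apply/orP; right.
  move: (xS); rewrite inE => /andP [xU _].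
  case: (HU x xU) => H1; last by move: (H1 a0 a0U); rewrite Hc // Ht.
  by rewrite H1 //; exact: inU.
- left => Hcon.
  suff : a0 \in N :\: U by rewrite inE a0U.
  apply: (@closed_conn e (N :\: U) _ c0 a0 _ (Hcon c0 a0)); last by rewrite inE c0U c0N.
  move=> x y xS; apply: contraTT => yS; apply/negP => exy.
  move: (xS); rewrite inE => /andP [xU _].
  case: (HU x xU) => H1.
    by move: (H1 a0 a0U); rewrite Hc // Ht.
  by move: (H1 y (inU y yS)); rewrite exy.
Qed.

Lemma exists_max (e : rel T) n : forall U : {set T}, #|T| - #|U| <= n ->
  is_module e U -> U \proper [set: T] ->
  exists W : {set T}, [/\ U \subset W, is_module e W, W \proper [set: T] &
     forall W', is_module e W' -> W \proper W' -> ~ W' \proper [set: T]].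
Proof.
elim: n => [|n IH] U Hn HU Up.
  have := proper_card Up; rewrite cardsT; move: Hn; lia.
case: (classic (exists W', [/\ is_module e W', U \proper W' & W' \proper [set: T]])).
  move=> [W' [HW' UW' W'p]].
  have Hc : #|T| - #|W'| <= n.
    have := proper_card UW'; have := proper_card W'p; rewrite cardsT.
    move: Hn; lia.
  have [W [h1 h2 h3 h4]] := IH W' Hc HW' W'p.
  by exists W; split => //; apply: subset_trans h1; exact: proper_sub.
move=> Hno; exists U; split => // W' HW' UW' W'p; apply: Hno; by exists W'.
Qed.

Lemma max_strong (e : rel T) (U : {set T}) : symmetric e ->
  connected_graph e -> connected_graph (compl_graph e) ->
  is_module e U -> U \proper [set: T] ->
  (forall W', is_module e W' -> U \proper W' -> ~ W' \proper [set: T]) ->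
  strong_module e U.
Proof.
move=> Hs C1 C2 HU Up Hmax; split => // N HN.
case: (boolP (U \subset N)) => UN; first by left.
case: (boolP (N \subset U)) => NU; first by right; left.
case: (boolP [disjoint U & N]) => dUN; first by right; right.
exfalso.
have ov : exists b, b \in U :&: N.
  by apply/set0Pn; apply: contraNneq dUN => H; rewrite -setI_eq0 H.
have HUN := @module_union e U N HU HN ov.
have UUN : U \proper U :|: N.
  rewrite properE subsetUl /=; apply: contra NU => H.
  by apply: subset_trans H; exact: subsetUr.
have eqT : U :|: N = [set: T].
  apply/eqP; rewrite eqEproper subsetT /=; apply/negP => H.
  exact: (Hmax _ HUN UUN H).
have [a] : exists a, a \in U :\: N.
  by move/subsetPn: UN => [a aU aN]; exists a; rewrite inE aU aN.
move=> aS; have [c] : exists c, c \in N :\: U.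
  by move/subsetPn: NU => [c cN cU]; exists c; rewrite inE cU cN.
move=> cS.
by case: (@overlap_disconn e U N Hs HU HN eqT (ex_intro _ a aS) (ex_intro _ c cS)).
Qed.

End Aux.

Theorem lemma3 (C : graph_class) (T : finType) (e : rel T)
  (He : simple_graph e) (HG : ~ gc_mem C e)
  (P Pstar : {set {set T}})
  (HP : class_modular_partition C e P)
  (HPstar : maximal_modular_partition e Pstar) :
  ((~ connected_graph e \/ ~ connected_graph (compl_graph e)) ->
     forall M M', M \in P -> M' \in Pstar ->
       M :&: M' = M \/ M :&: M' = M' \/ M :&: M' = set0) /\
  ((connected_graph e /\ connected_graph (compl_graph e)) ->
     forall M, M \in P -> exists2 M', M' \in Pstar & M \subset M').
Proof.
case: HP => HPp HPm; case: HPstar => HSp HSm.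
split.
  move=> _ M M' MP M'S.
  have [[_ st] _] := HSm M' M'S.
  case: (st M (proj1 (HPm M MP))) => [H|[H|H]].
  - by right; left; apply/setIidPr.
  - by left; apply/setIidPl.
  - by right; right; apply: disjoint_setI0; rewrite disjoint_sym.
move=> [C1 C2] M MP.
have [HM HC] := HPm M MP.
move: HPp; rewrite /partition => /and3P [/eqP cP _ P0].
move: HSp; rewrite /partition => /and3P [/eqP cS _ S0].
have [x xM] : exists x, x \in M.
  by apply/set0Pn; apply: contraNneq P0 => <-.
have Mp : M \proper [set: T].
  rewrite properE subsetT /=; apply/negP => /subsetP H.
  have HM' : forall y, y \in M by move=> y; apply: H.
  apply: HG; have := @gc_iso C _ T (@induced T e M) e val.
  move=> Hi; apply: Hi HC => //.
  exists (fun y => exist (fun y => y \in M) y (HM' y)) => [z|y] //=; by apply: val_inj.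
have [W [MW HW Wp Wmax]] := @exists_max T e #|T| M (leq_subr _ _) HM Mp.
have Wst := @max_strong T e W (proj1 He) C1 C2 HW Wp Wmax.
have xc : x \in cover Pstar by rewrite cS.
have BS := pblock_mem xc.
have xB : x \in pblock Pstar x by rewrite mem_pblock.
have [[_ st] [_ maxB]] := HSm _ BS.
case: (st M HM) => [H|[H|H]].
- case: (eqVneq (pblock Pstar x) M) => [E|ne].
    by exists (pblock Pstar x) => //; rewrite E.
  exfalso; apply: (maxB W Wst) => //.
  rewrite properEneq; apply/andP; split; last exact: subset_trans H MW.
  apply: contra ne => /eqP E; rewrite eqEsubset H /=; by rewrite -E in MW *.
- by exists (pblock Pstar x).
- by rewrite (disjointFr H xB) in xM.
Qed.
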